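(* Let $n\ge 2$, $m\ge 2$, and let $\mathcal{A}=(a_{i_1\ldots i_m})\in S_{m,n+1}$ be a regularly decomposable tensor. Then $\mathcal{A}$ can be written as $$\mathcal{A}=\sum_{k=1}^r \alpha_k\left(\mathbf{v}^{(k)}\right)^{\otimes m},$$ where $\alpha_k>0$ and $\mathbf{v}^{(k)}=(1,v^{(k)}_1,\ldots,v^{(k)}_n)^\top\in\mathbb{R}^{n+1}$ with $\sum_{i=1}^n\left(v^{(k)}_i\right)^2=1$ for $k=1,\ldots,r$. Furthermore, $$a_{00i_3\ldots i_m}=\sum_{i=1}^n a_{ii\,i_3\ldots i_m}$$ for all $i_3,\ldots,i_m\in\{0,1,\ldots,n\}$.
   Context: Vectors in $\mathbb{R}^{n+1}$ are indexed $\mathbf{x}=(x_0,x_1,\ldots,x_n)^\top$, with $n\ge 2$. $S_{m,n+1}$ denotes the space of real symmetric tensors $\mathcal{A}=(a_{i_1\ldots i_m})$ of order $m$ and dimension $n+1$ (indices in $\{0,\ldots,n\}$, entries invariant under permutations of indices). For $\mathbf{u}\in\mathbb{R}^{n+1}$, $\mathbf{u}^{\otimes m}$ is the tensor with entries $u_{i_1}\cdots u_{i_m}$. A vector $\mathbf{x}\in\mathbb{R}^{n+1}$ is regular if $x_0\neq 0$ and $x_0^2=x_1^2+\cdots+x_n^2$. For $\mathcal{A}\in S_{m,n+1}$, its $i$th row tensor is $\mathcal{A}_i=(a_{i i_2\ldots i_m})\in S_{m-1,n+1}$, $i=0,\ldots,n$. Regularly decomposable tensors: (i) if $m=2l$ is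 even, $\mathcal{A}\in S_{m,n+1}$ is regularly decomposable if $\mathcal{A}=\sum_{k=1}^r(\mathbf{u}^{(k)})^{\otimes m}$ for some regular vectors $\mathbf{u}^{(1)},\ldots,\mathbf{u}^{(r)}$; (ii) if $m=2l+1$ is odd, $\mathcal{A}\in S_{m,n+1}$ is regularly decomposable if its row tensor $\mathcal{A}_0\in S_{2l,n+1}$ has a decomposition $\mathcal{A}_0=\sum_{k=1}^r(\mathbf{u}^{(k)})^{\otimes 2l}$ with regular vectors $\mathbf{u}^{(k)}=(u^{(k)}_0,\ldots,u^{(k)}_n)^\top$, and the other row tensors satisfy $\mathcal{A}_i=\sum_{k=1}^r\frac{u^{(k)}_i}{u^{(k)}_0}(\mathbf{u}^{(k)})^{\otimes 2l}$ for $i=1,\ldots,n$. *)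

(* Defs.v *)
From HB Require Import structures.
From mathcomp Require Import all_boot all_order all_algebra perm.
Set Implicit Arguments. Unset Strict Implicit. Unset Printing Implicit Defensive.
Import Order.TTheory GRing.Theory Num.Theory.
Local Open Scope ring_scope.

(* Indices range over 'I_n.+1 = {0,...,n}; index 0 is ord0, index i (1<=i<=n)
   is lift ord0 i' for i' : 'I_n. *)

Notation tensor R m n := {ffun m.-tuple 'I_n.+1 -> R}.

Definition vec (R : realFieldType) (n : nat) := 'I_n.+1 -> R.

Definition symmetric_tensor (R : realFieldType) m n (A : tensor R m n) : Prop :=
  forall (s : 'S_m) (t : m.-tuple 'I_n.+1),
    A [tuple tnth t (s j) | j < m] = A t.

Definition tpow (R : realFieldType) (m n : nat) (u : vec R n) : tensor R m n :=
  [ffun t : m.-tuple 'I_n.+1 => \prod_(j < m) u (tnth t j)].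

Definition tscale (R : realFieldType) m n (c : R) (A : tensor R m n) : tensor R m n :=
  [ffun t => c * A t].

Definition regular (R : realFieldType) n (u : vec R n) : Prop :=
  u ord0 != 0 /\ u ord0 ^+ 2 = \sum_(i < n) u (lift ord0 i) ^+ 2.

(* the m-tuple with entries given by the sequence s (used only with size s = m) *)
Definition mkidx (m n : nat) (s : seq 'I_n.+1) : m.-tuple 'I_n.+1 :=
  insubd (nseq_tuple m ord0) s.

Definition row_tensor (R : realFieldType) m n (A : tensor R m n) (i : 'I_n.+1)
  : tensor R m.-1 n :=
  [ffun t : m.-1.-tuple 'I_n.+1 => A (mkidx m (i :: val t))].

Definition regularly_decomposable (R : realFieldType) m n (A : tensor R m n)
  : Prop :=
  if ~~ odd m then
    exists r (u : 'I_r -> vec R n),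
      (forall k, regular (u k)) /\ A = \sum_(k < r) tpow m (u k)
  else
    (* m = 2l+1, so m.-1 = 2l *)
    exists r (u : 'I_r -> vec R n),
      (forall k, regular (u k)) /\
      row_tensor A ord0 = \sum_(k < r) tpow m.-1 (u k) /\
      (forall i : 'I_n,
         row_tensor A (lift ord0 i)
         = \sum_(k < r) tscale (u k (lift ord0 i) / u k ord0) (tpow m.-1 (u k))).

(* Main.v *)
Require Import Defs.
From HB Require Import structures.
From mathcomp Require Import all_boot all_order all_algebra perm.
From mathcomp Require Import ring.
Import Order.TTheory GRing.Theory Num.Theory.
Local Open Scope ring_scope.

Lemma mkidxK m n (s : seq 'I_n.+1) : size s = m -> val (mkidx m s) = s.
Proof. by move=> h; rewrite /mkidx val_insubd h eqxx. Qed.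

Lemma tpow_seq (R : realFieldType) m n (u : vec R n) (t : m.-tuple 'I_n.+1) :
  tpow m u t = \prod_(x <- t) u x.
Proof. by rewrite ffunE big_tuple. Qed.

Lemma prod_div (R : realFieldType) n (u : vec R n) (c : R) (s : seq 'I_n.+1) :
  c != 0 -> \prod_(x <- s) (u x / c) = (\prod_(x <- s) u x) / c ^+ size s.
Proof.
move=> hc; elim: s => [|x s IH]; first by rewrite !big_nil expr0 divr1.
rewrite !big_cons IH /= exprS; field; by rewrite ?mulf_neq0 ?expf_neq0.
Qed.

Lemma second_part (R : realFieldType) (n m : nat) (hm : (2 <= m)%N)
  (A : tensor R m n) r (alpha : 'I_r -> R) (v : 'I_r -> vec R n) :
  (forall k, v k ord0 = 1) ->
  (forall k, \sum_(i < n) v k (lift ord0 i) ^+ 2 = 1) ->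
  A = \sum_(k < r) tscale (alpha k) (tpow m (v k)) ->
  (forall t : (m - 2).-tuple 'I_n.+1,
     A (mkidx m [:: ord0, ord0 & val t])
     = \sum_(i < n) A (mkidx m [:: lift ord0 i, lift ord0 i & val t])).
Proof.
move=> h0 h1 ->  t.
have sz : forall a b : 'I_n.+1, size [:: a, b & val t] = m.
  by move=> a b /=; rewrite size_tuple -addn2 subnK.
have ev : forall a b, (\sum_(k < r) tscale (alpha k) (tpow m (v k)))
    (mkidx m [:: a, b & val t]) =
    \sum_(k < r) alpha k * (v k a * (v k b * \prod_(x <- val t) v k x)).
  move=> a b; rewrite sum_ffunE; apply: eq_bigr => k _.
  by rewrite ffunE tpow_seq mkidxK ?sz // !big_cons.
rewrite ev; under [RHS]eq_bigr do rewrite ev.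
rewrite exchange_big /=; apply: eq_bigr => k _.
rewrite h0 !mul1r -mulr_sumr; congr (_ * _).
rewrite -[LHS]mul1r -(h1 k) mulr_suml; apply: eq_bigr => i _.
by rewrite mulrA expr2.
Qed.

Lemma first_part (R : realFieldType) (n m : nat) (hm : (2 <= m)%N)
  (A : tensor R m n) (hA : regularly_decomposable A) :
  (exists r (alpha : 'I_r -> R) (v : 'I_r -> vec R n),
     (forall k, 0 < alpha k) /\
     (forall k, v k ord0 = 1) /\
     (forall k, \sum_(i < n) v k (lift ord0 i) ^+ 2 = 1) /\
     A = \sum_(k < r) tscale (alpha k) (tpow m (v k))).
Proof.
move: hA; rewrite /regularly_decomposable.
case: ifPn => hodd [r [u [hreg hdec]]].
- exists r, (fun k => u k ord0 ^+ m), (fun k i => u k i / u k ord0).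
  have nz : forall k, u k ord0 != 0 by move=> k; case: (hreg k).
  split; [|split; [|split]].
  + by move=> k; rewrite exprn_even_gt0 // nz orbT.
  + by move=> k; rewrite divff.
  + move=> k; under eq_bigr do rewrite expr_div_n.
    by rewrite -mulr_suml -(hreg k).2 divff // expf_neq0.
  + rewrite hdec; apply: eq_bigr => k _; apply/ffunP => t.
    rewrite tpow_seq ffunE tpow_seq prod_div // size_tuple.
    field; by rewrite expf_neq0.
- case: hdec => h1 h2.
  have nz : forall k, u k ord0 != 0 by move=> k; case: (hreg k).
  have hrow : forall i rest, row_tensor A i rest =
      \sum_(k < r) (u k i / u k ord0) * tpow m.-1 (u k) rest.
    move=> i rest; case: (unliftP ord0 i) => [j ->|->].
      by rewrite h2 sum_ffunE; apply: eq_bigr => k _; rewrite ffunE.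
    by rewrite h1 sum_ffunE; apply: eq_bigr => k _; rewrite divff // mul1r.
  exists r, (fun k => u k ord0 ^+ m.-1), (fun k i => u k i / u k ord0).
  split; [|split; [|split]].
  + move=> k; rewrite exprn_even_gt0 ?nz ?orbT //.
    by case: m hm hodd {A hrow h1 h2} => [|m'] //=; rewrite negbK.
  + by move=> k; rewrite divff.
  + move=> k; under eq_bigr do rewrite expr_div_n.
    by rewrite -mulr_suml -(hreg k).2 divff // expf_neq0.
  + apply/ffunP => t; case: m hm hodd A h1 h2 hrow t => [|m'] // _ _ A h1 h2 hrow.
    case=> [[|x s] hs] //.
    have hs' : size s == m' by [].
    have -> : A (Tuple hs) = row_tensor A x (Tuple hs').
      rewrite ffunE; congr (A _); apply: val_inj; rewrite mkidxK //=.
      by rewrite (eqP hs').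
    rewrite hrow !sum_ffunE; apply: eq_bigr => k _.
    rewrite [in RHS]ffunE !tpow_seq /= big_cons prod_div // (eqP hs').
    field; by rewrite expf_neq0 ?nz.
Qed.

Theorem theorem2p4 (R : realFieldType) (n m : nat) (hn : (2 <= n)%N) (hm : (2 <= m)%N)
  (A : tensor R m n) (hsym : symmetric_tensor A) (hA : regularly_decomposable A) :
  (exists r (alpha : 'I_r -> R) (v : 'I_r -> vec R n),
     (forall k, 0 < alpha k) /\
     (forall k, v k ord0 = 1) /\
     (forall k, \sum_(i < n) v k (lift ord0 i) ^+ 2 = 1) /\
     A = \sum_(k < r) tscale (alpha k) (tpow m (v k))) /\
  (forall t : (m - 2).-tuple 'I_n.+1,
     A (mkidx m [:: ord0, ord0 & val t])
     = \sum_(i < n) A (mkidx m [:: lift ord0 i, lift ord0 i & val t])).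
Proof.
have H := @first_part R n m hm A hA.
split => //.
case: H => r [alpha [v [_ [h0 [h1 h2]]]]].
exact: (@second_part R n m hm A r alpha v h0 h1 h2).
Qed.
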